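(* Let $k\ge 0$, let $f\in C^1(\mathbb{R})$, and consider the Zakharov–Kuznetsov equation $u_t+f(u)_x+u_{xxx}+u_{xyy}=0$ on the rectangle $\Omega=[a,b]\times[c,d]$ with periodic boundary conditions, discretized by the semi-discrete ultra-weak DG scheme described in the context. Then the numerical solution $u^h(\cdot,\cdot,t)\in \mathbf{V}_h^k$ satisfies $$\frac{d}{dt}\int_{\Omega}\big(u^h(x,y,t)\big)^2\,dx\,dy\le 0 .$$
   Context: Mesh: $a=x_{1/2}<x_{3/2}<\dots<x_{N_x+1/2}=b$, $c=y_{1/2}<\dots<y_{N_y+1/2}=d$, $I_i=[x_{i-1/2},x_{i+1/2}]$, $J_j=[y_{j-1/2},y_{j+1/2}]$, $K_{i,j}=I_i\times J_j$ (a shape-regular partition into rectangles). $\mathbf{V}_h^k=\{v\in L^2(\Omega): v|_{K_{i,j}}\in Q^k(K_{i,j})\ \forall i,j\}$, where $Q^k$ denotes tensor-product polynomials of degree at most $k$ in each variable. For $w\in\mathbf{V}_h^k$ (and its piecewise derivatives), $w(x_{i+1/2}^{\pm},y)$, $w(x,y_{j+1/2}^{\pm})$, $w(x_{i+1/2}^{\pm},y_{j+1/2}^{\pm})$ denote one-sided limits (traces from the right/above for $+$, from the left/below for $-$). Periodicity: indices are taken periodically, i.e. the interfaces $x_{1/2}$ and $x_{N_x+1/2}$ are identified (so e.g. $w(x_{N_x+1/2}^+,y)=w(x_{1/2}^+,y)$, $w(x_{1/2}^-,y)=w(x_{N_x+1/2}^-,y)$), and similarly in $y$. All sums below run over $i=1,\dots,N_x$,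 $j=1,\dots,N_y$; volume integrals $\int_\Omega$ of derivatives of $v$ are understood cellwise. Numerical flux for convection (global Lax–Friedrichs): $\hat f_{i+1/2}(y)=\tfrac12\big(f(u^h(x_{i+1/2}^+,y))+f(u^h(x_{i+1/2}^-,y))\big)-\alpha\big(u^h(x_{i+1/2}^+,y)-u^h(x_{i+1/2}^-,y)\big)$, with $\alpha=\max|f'(u)|$ (maximum over the range of values involved, so that $|f'(w)|\le\alpha$ for all relevant $w$). Scheme: find $u^h(t)\in\mathbf{V}_h^k$ such that for all $v\in\mathbf{V}_h^k$, $$\int_\Omega u^h_t v=\int_\Omega f(u^h)v_x+\int_\Omega u^h v_{xxx}+\int_\Omega u^h v_{xyy}$$ $$-\sum_{i,j}\int_{J_j}\big[\hat f_{i+1/2}(y)v(x_{i+1/2}^-,y)-\hat f_{i-1/2}(y)v(x_{i-1/2}^+,y)\big]dy$$ $$-\sum_{i,j}\int_{J_j}\big[u^h_{xx}(x_{i+1/2}^+,y)v(x_{i+1/2}^-,y)-u^h_{xx}(x_{i-1/2}^+,y)v(x_{i-1/2}^+,y)\big]dy$$ $$+\sum_{i,j}\int_{J_j}\big[u^h_{x}(x_{i+1/2}^+,y)v_x(x_{i+1/2}^-,y)-u^h_{x}(x_{i-1/2}^+,y)v_x(x_{i-1/2}^+,y)\big]dy$$ $$-\sum_{i,j}\int_{J_j}\big[u^h(x_{i+1/2}^-,y)v_{xx}(x_{i+1/2}^-,y)-u^h(x_{i-1/2}^-,y)v_{xx}(x_{i-1/2}^+,y)\big]dy$$ $$+\sum_{i,j}\int_{I_i}\big[u^h_y(x,y_{j+1/2}^+)v_x(x,y_{j+1/2}^-)-u^h_y(x,y_{j-1/2}^+)v_x(x,y_{j-1/2}^+)\big]dx$$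 $$+\sum_{i,j}\big[-u^h_y(x_{i+1/2}^-,y_{j+1/2}^+)v(x_{i+1/2}^-,y_{j+1/2}^-)+u^h_y(x_{i-1/2}^-,y_{j+1/2}^+)v(x_{i-1/2}^+,y_{j+1/2}^-)$$ $$\qquad+u^h_y(x_{i+1/2}^-,y_{j-1/2}^+)v(x_{i+1/2}^-,y_{j-1/2}^+)-u^h_y(x_{i-1/2}^-,y_{j-1/2}^+)v(x_{i-1/2}^+,y_{j-1/2}^+)\big]$$ $$-\sum_{i,j}\int_{J_j}\big[u^h(x_{i+1/2}^+,y)v_{yy}(x_{i+1/2}^-,y)-u^h(x_{i-1/2}^+,y)v_{yy}(x_{i-1/2}^+,y)\big]dy$$ $$+\sum_{i,j}\big[u^h(x_{i+1/2}^+,y_{j+1/2}^-)v_y(x_{i+1/2}^-,y_{j+1/2}^-)-u^h(x_{i+1/2}^+,y_{j-1/2}^-)v_y(x_{i+1/2}^-,y_{j-1/2}^+)$$ $$\qquad-u^h(x_{i-1/2}^+,y_{j+1/2}^-)v_y(x_{i-1/2}^+,y_{j+1/2}^-)+u^h(x_{i-1/2}^+,y_{j-1/2}^-)v_y(x_{i-1/2}^+,y_{j-1/2}^+)\big]$$ $$-\sum_{i,j}\int_{I_i}\big[u^h(x,y_{j+1/2}^-)v_{xy}(x,y_{j+1/2}^-)-u^h(x,y_{j-1/2}^-)v_{xy}(x,y_{j-1/2}^+)\big]dx.$$ This is a system of ODEs for the coefficients of $u^h$, whose solution is assumed to exist and be $C^1$ in $t$. *)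

(* Defs.v *)
From Stdlib Require Import Reals Lra Lia.
From Coquelicot Require Import Coquelicot.
Open Scope R_scope.

Fixpoint sumR (n : nat) (g : nat -> R) : R :=
  match n with
  | O => 0
  | S n' => sumR n' g + g n'
  end.

(* dfact m d = m (m-1) ... (m-d+1) (falling factorial, as a real; 0 if d > m) *)
Fixpoint dfact (m d : nat) : R :=
  match d with
  | O => 1
  | S d' => dfact m d' * INR (m - d')
  end.

(* A polynomial in Q^k, given by its coefficients c m n of x^m y^n (0 <= m,n <= k). *)
Definition poly2 := nat -> nat -> R.

(* The partial derivative d^dx/dx^dx d^dy/dy^dy of sum_{m,n<=k} c m n x^m y^n, at (x,y). *)
Definition peval (k : nat) (c : poly2) (dx dy : nat) (x y : R) : R :=
  sumR (S k) (fun m => sumR (S k) (fun n =>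
    c m n * dfact m dx * dfact n dy * x ^ (m - dx)%nat * y ^ (n - dy)%nat)).

(* An element of V_h^k: cell (p,q) (0-based, p < Nx, q < Ny; cell (p,q) is
   K = [xs p, xs (p+1)] x [ys q, ys (q+1)]) carries the polynomial W p q. *)
Definition dgfun := nat -> nat -> poly2.

Definition ev (k : nat) (W : dgfun) (p q dx dy : nat) (x y : R) : R :=
  peval k (W p q) dx dy x y.

Definition nextI (N p : nat) : nat := Nat.modulo (S p) N.
Definition prevI (N p : nat) : nat := Nat.modulo (p + N - 1) N.

Definition Int2 (x0 x1 y0 y1 : R) (g : R -> R -> R) : R :=
  RInt (fun x => RInt (fun y => g x y) y0 y1) x0 x1.

(* global Lax-Friedrichs flux, up = u^+, um = u^- *)
Definition LF (f : R -> R) (alpha up um : R) : R :=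
  (f up + f um) / 2 - alpha * (up - um).

Definition l2ip (k Nx Ny : nat) (xs ys : nat -> R) (U V : dgfun) : R :=
  sumR Nx (fun p => sumR Ny (fun q =>
    Int2 (xs p) (xs (S p)) (ys q) (ys (S q))
      (fun x y => ev k U p q 0%nat 0%nat x y * ev k V p q 0%nat 0%nat x y))).

(* Dictionary (paper 1-based cell i <-> 0-based p = i-1):
   x_{i+1/2} = xr, x_{i-1/2} = xl; a trace from the right of x_{i+1/2} is the
   polynomial of the right neighbour pR evaluated at its left end xlR (periodic),
   a trace from the left of x_{i-1/2} is the polynomial of pL at its right end xrL;
   similarly in y. *)
Definition scheme_rhs (k Nx Ny : nat) (xs ys : nat -> R) (f : R -> R) (alpha : R)
    (U V : dgfun) : R :=
  sumR Nx (fun p => sumR Ny (fun q =>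
    let xl := xs p in let xr := xs (S p) in
    let yl := ys q in let yr := ys (S q) in
    let pR := nextI Nx p in let pL := prevI Nx p in
    let qR := nextI Ny q in let qL := prevI Ny q in
    let xlR := xs pR in let xrL := xs (S pL) in
    let ylR := ys qR in let yrL := ys (S qL) in
    let u := ev k U in let v := ev k V in
      Int2 xl xr yl yr (fun x y => f (u p q 0%nat 0%nat x y) * v p q 1%nat 0%nat x y)
    + Int2 xl xr yl yr (fun x y => u p q 0%nat 0%nat x y * v p q 3%nat 0%nat x y)
    + Int2 xl xr yl yr (fun x y => u p q 0%nat 0%nat x y * v p q 1%nat 2%nat x y)
    - RInt (fun y => LF f alpha (u pR q 0%nat 0%nat xlR y) (u p q 0%nat 0%nat xr y) * v p q 0%nat 0%nat xr y
                   - LF f alpha (u p q 0%nat 0%nat xl y) (u pL q 0%nat 0%nat xrL y) * v p q 0%nat 0%nat xl y) yl yr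
    - RInt (fun y => u pR q 2%nat 0%nat xlR y * v p q 0%nat 0%nat xr y
                   - u p q 2%nat 0%nat xl y * v p q 0%nat 0%nat xl y) yl yr
    + RInt (fun y => u pR q 1%nat 0%nat xlR y * v p q 1%nat 0%nat xr y
                   - u p q 1%nat 0%nat xl y * v p q 1%nat 0%nat xl y) yl yr
    - RInt (fun y => u p q 0%nat 0%nat xr y * v p q 2%nat 0%nat xr y
                   - u pL q 0%nat 0%nat xrL y * v p q 2%nat 0%nat xl y) yl yr
    + RInt (fun x => u p qR 0%nat 1%nat x ylR * v p q 1%nat 0%nat x yr
                   - u p q 0%nat 1%nat x yl * v p q 1%nat 0%nat x yl) xl xr
    + ( - u p qR 0%nat 1%nat xr ylR * v p q 0%nat 0%nat xr yr
        + u pL qR 0%nat 1%nat xrL ylR * v p q 0%nat 0%nat xl yr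
        + u p q 0%nat 1%nat xr yl * v p q 0%nat 0%nat xr yl
        - u pL q 0%nat 1%nat xrL yl * v p q 0%nat 0%nat xl yl)
    - RInt (fun y => u pR q 0%nat 0%nat xlR y * v p q 0%nat 2%nat xr y
                   - u p q 0%nat 0%nat xl y * v p q 0%nat 2%nat xl y) yl yr
    + ( u pR q 0%nat 0%nat xlR yr * v p q 0%nat 1%nat xr yr
        - u pR qL 0%nat 0%nat xlR yrL * v p q 0%nat 1%nat xr yl
        - u p q 0%nat 0%nat xl yr * v p q 0%nat 1%nat xl yr
        + u p qL 0%nat 0%nat xl yrL * v p q 0%nat 1%nat xl yl)
    - RInt (fun x => u p q 0%nat 0%nat x yr * v p q 1%nat 1%nat x yr
                   - u p qL 0%nat 0%nat x yrL * v p q 1%nat 1%nat x yl) xl xr)).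

Definition in_value_range (k Nx Ny : nat) (xs ys : nat -> R) (W : dgfun) (w : R) : Prop :=
  exists p q x y p' q' x' y',
    (p < Nx)%nat /\ (q < Ny)%nat /\ (p' < Nx)%nat /\ (q' < Ny)%nat /\
    xs p <= x <= xs (S p) /\ ys q <= y <= ys (S q) /\
    xs p' <= x' <= xs (S p') /\ ys q' <= y' <= ys (S q') /\
    ev k W p q 0%nat 0%nat x y <= w <= ev k W p' q' 0%nat 0%nat x' y'.

(* Main.v *)
Require Import Defs.
From Stdlib Require Import Reals Lra Lia.
From Coquelicot Require Import Coquelicot.
Open Scope R_scope.


Lemma sumR_ext n f g : (forall i, (i < n)%nat -> f i = g i) -> sumR n f = sumR n g.
Proof. induction n; simpl; intros H; auto. rewrite IHn by (intros; apply H; lia). rewrite H by lia. auto. Qed.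
Lemma sumR_plus n f g : sumR n (fun i => f i + g i) = sumR n f + sumR n g.
Proof. induction n; simpl; [ring|rewrite IHn; ring]. Qed.
Lemma sumR_minus n f g : sumR n (fun i => f i - g i) = sumR n f - sumR n g.
Proof. induction n; simpl; [ring|rewrite IHn; ring]. Qed.
Lemma sumR_scal n c f : sumR n (fun i => c * f i) = c * sumR n f.
Proof. induction n; simpl; [ring|rewrite IHn; ring]. Qed.
Lemma sumR_le0 n f : (forall i, (i<n)%nat -> f i <= 0) -> sumR n f <= 0.
Proof. induction n; simpl; intros H; [lra|]. assert (f n <= 0) by (apply H; lia).
 assert (sumR n f <= 0) by (apply IHn; intros; apply H; lia). lra. Qed.
Lemma sumR_shift n g : sumR (S n) g = g O + sumR n (fun i => g (S i)).
Proof. induction n. simpl; ring. change (sumR (S (S n)) g) with (sumR (S n) g + g (S n)).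
 rewrite IHn. simpl. ring. Qed.
Lemma sumR_multl n f c : sumR n f * c = sumR n (fun i => f i * c).
Proof. induction n; simpl; [ring|rewrite <- IHn; ring]. Qed.
Lemma sumR_mult n m f g : sumR n f * sumR m g = sumR n (fun i => sumR m (fun j => f i * g j)).
Proof. rewrite sumR_multl. apply sumR_ext; intros. rewrite Rmult_comm, sumR_multl.
 apply sumR_ext; intros; ring. Qed.

Lemma nextI_lt N p : (1<=N)%nat -> (nextI N p < N)%nat.
Proof. intros. unfold nextI. apply Nat.mod_upper_bound. lia. Qed.
Lemma prevI_lt N p : (1<=N)%nat -> (prevI N p < N)%nat.
Proof. intros. unfold prevI. apply Nat.mod_upper_bound. lia. Qed.
Lemma prevI_nextI N p : (p < N)%nat -> prevI N (nextI N p) = p.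
Proof. intros. unfold prevI, nextI. destruct (Nat.eq_dec (S p) N).
 - subst. rewrite Nat.Div0.mod_same. replace (0 + S p - 1)%nat with p by lia. apply Nat.mod_small; lia.
 - rewrite (Nat.mod_small (S p)) by lia. replace (S p + N - 1)%nat with (p + 1 * N)%nat by lia.
   rewrite Nat.Div0.mod_add by lia. apply Nat.mod_small; lia. Qed.
Lemma sumR_nextI N g : (1<=N)%nat -> sumR N (fun p => g (nextI N p)) = sumR N g.
Proof. intros H. destruct N as [|n]; [lia|].
 change (sumR (S n) (fun p => g (nextI (S n) p))) with (sumR n (fun p => g (nextI (S n) p)) + g (nextI (S n) n)).
 replace (nextI (S n) n) with O.
 2:{ unfold nextI. rewrite Nat.Div0.mod_same; lia. }
 rewrite sumR_shift. rewrite (sumR_ext n _ (fun i => g (S i))). ring.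
 intros. unfold nextI. rewrite Nat.mod_small by lia. auto. Qed.
Lemma tel_sum N g : (1<=N)%nat -> sumR N (fun p => g p - g (nextI N p)) = 0.
Proof. intros. rewrite sumR_minus, sumR_nextI; auto; ring. Qed.


Lemma dval (f : R -> R) (x l l' : R) : is_derive f x l -> l = l' -> is_derive f x l'.
Proof. intros H ->; exact H. Qed.
Lemma dR_plus (f g : R -> R) (x df dg : R) : is_derive f x df -> is_derive g x dg ->
  is_derive (fun y => f y + g y) x (df + dg).
Proof. intros; exact (is_derive_plus f g x df dg H H0). Qed.
Lemma dR_minus (f g : R -> R) (x df dg : R) : is_derive f x df -> is_derive g x dg ->
  is_derive (fun y => f y - g y) x (df - dg).
Proof. intros; exact (is_derive_minus f g x df dg H H0). Qed.
Lemma dR_opp (f : R -> R) (x df : R) : is_derive f x df -> is_derive (fun y => - f y) x (- df).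
Proof. intros; exact (is_derive_opp f x df H). Qed.
Lemma dR_mult (f g : R -> R) (x df dg : R) : is_derive f x df -> is_derive g x dg ->
  is_derive (fun y => f y * g y) x (df * g x + f x * dg).
Proof. intros. apply (is_derive_mult f g x df dg H H0). intros; apply Rmult_comm. Qed.
Lemma dR_const (c x : R) : is_derive (fun _ => c) x 0.
Proof. exact (is_derive_const c x). Qed.
Lemma dR_id (x : R) : is_derive (fun y => y) x 1.
Proof. exact (is_derive_id x). Qed.
Lemma dR_comp (phi phi' : R -> R) (f : R -> R) (x df : R) : (forall w, is_derive phi w (phi' w)) ->
  is_derive f x df -> is_derive (fun y => phi (f y)) x (phi' (f x) * df).
Proof. intros. eapply dval. apply (is_derive_comp phi f x (phi' (f x)) df (H (f x)) H0).
 simpl. unfold scal; simpl. unfold mult; simpl. ring. Qed.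
Lemma dR_sumR n (f : nat -> R -> R) (df : nat -> R) (x : R) : (forall i, is_derive (f i) x (df i)) ->
  is_derive (fun z => sumR n (fun i => f i z)) x (sumR n df).
Proof. intros H; induction n; simpl. apply dR_const. apply dR_plus; auto. Qed.

Lemma cR_plus (f g : R -> R) (x : R) : continuous f x -> continuous g x -> continuous (fun y => f y + g y) x.
Proof. intros; exact (continuous_plus f g x H H0). Qed.
Lemma cR_minus (f g : R -> R) (x : R) : continuous f x -> continuous g x -> continuous (fun y => f y - g y) x.
Proof. intros; exact (continuous_minus f g x H H0). Qed.
Lemma cR_mult (f g : R -> R) (x : R) : continuous f x -> continuous g x -> continuous (fun y => f y * g y) x.
Proof. intros; exact (continuous_mult f g x H H0). Qed.
Lemma cR_opp (f : R -> R) (x : R) : continuous f x -> continuous (fun y => - f y) x.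
Proof. intros; exact (continuous_opp f x H). Qed.
Lemma cR_const (c x : R) : continuous (fun _ => c) x.
Proof. exact (continuous_const c x). Qed.
Lemma cR_id (x : R) : continuous (fun y => y) x.
Proof. exact (continuous_id x). Qed.
Lemma cR_comp (phi : R -> R) (f : R -> R) (x : R) : (forall w, continuous phi w) -> continuous f x ->
  continuous (fun y => phi (f y)) x.
Proof. intros. apply (continuous_comp f phi x H0 (H (f x))). Qed.

Lemma term_dx A B j x : is_derive (fun z => A * z ^ j * B) x (A * (INR j * x ^ pred j) * B).
Proof. auto_derive; auto. ring. Qed.
Lemma term_dy A j y : is_derive (fun z => A * z ^ j) y (A * (INR j * y ^ pred j)).
Proof. auto_derive; auto. ring. Qed.

Lemma ev_dx k W p q dx dy x y :
  is_derive (fun z => ev k W p q dx dy z y) x (ev k W p q (S dx) dy x y).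
Proof. unfold ev, peval. apply dR_sumR; intro m. apply dR_sumR; intro n.
 eapply dval. apply (term_dx (W p q m n * dfact m dx * dfact n dy) (y ^ (n - dy))).
 simpl dfact. replace (pred (m - dx)) with (m - S dx)%nat by lia. ring. Qed.
Lemma ev_dy k W p q dx dy x y :
  is_derive (fun z => ev k W p q dx dy x z) y (ev k W p q dx (S dy) x y).
Proof. unfold ev, peval. apply dR_sumR; intro m. apply dR_sumR; intro n.
 eapply dval. apply (term_dy (W p q m n * dfact m dx * dfact n dy * x ^ (m - dx))).
 simpl dfact. replace (pred (n - dy)) with (n - S dy)%nat by lia. ring. Qed.
Lemma ev_cx k W p q dx dy y x : continuous (fun z => ev k W p q dx dy z y) x.
Proof. apply (@ex_derive_continuous R_AbsRing R_NormedModule). eexists. apply ev_dx. Qed.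
Lemma ev_cy k W p q dx dy x y : continuous (fun z => ev k W p q dx dy x z) y.
Proof. apply (@ex_derive_continuous R_AbsRing R_NormedModule). eexists. apply ev_dy. Qed.

Lemma dR_divc (f : R -> R) (x df c : R) : is_derive f x df -> is_derive (fun y => f y / c) x (df / c).
Proof. intros. unfold Rdiv. eapply dval. apply dR_mult. exact H. apply dR_const. cbv beta; ring. Qed.
Lemma cR_divc (f : R -> R) (x c : R) : continuous f x -> continuous (fun y => f y / c) x.
Proof. intros. unfold Rdiv. apply cR_mult. exact H. apply cR_const. Qed.

Ltac cont1 :=
  match goal with
  | |- continuous (fun y => @?a y + @?b y) _ => apply cR_plus
  | |- continuous (fun y => @?a y - @?b y) _ => apply cR_minus
  | |- continuous (fun y => @?a y * @?b y) _ => apply cR_mult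
  | |- continuous (fun y => @?a y / ?c) _ => apply cR_divc
  | |- continuous (fun y => - @?a y) _ => apply cR_opp
  | |- continuous (fun y => ev _ _ _ _ _ _ _ y) _ => apply ev_cy
  | |- continuous (ev _ _ _ _ _ _ _) _ => apply ev_cy
  | |- continuous (fun y => ev _ _ _ _ _ _ y _) _ => apply ev_cx
  | H : forall w, continuous ?F w |- continuous (fun y => ?F (@?g y)) _ =>
       apply (cR_comp F); [exact H|]
  | |- continuous (fun y => y) _ => apply cR_id
  | |- continuous (fun y => ?c) _ => apply cR_const
  end.
Ltac cont := repeat cont1.

Ltac der1 :=
  match goal with
  | |- is_derive (fun y => @?a y + @?b y) _ _ => apply dR_plus
  | |- is_derive (fun y => @?a y - @?b y) _ _ => apply dR_minus
  | |- is_derive (fun y => @?a y * @?b y) _ _ => apply dR_mult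
  | |- is_derive (fun y => @?a y / ?c) _ _ => apply dR_divc
  | |- is_derive (fun y => - @?a y) _ _ => apply dR_opp
  | |- is_derive (fun y => ev _ _ _ _ _ _ _ y) _ _ => apply ev_dy
  | |- is_derive (ev _ _ _ _ _ _ _) _ _ => apply ev_dy
  | |- is_derive (fun y => ev _ _ _ _ _ _ y _) _ _ => apply ev_dx
  | H : forall w, is_derive ?F w _ |- is_derive (fun y => ?F (@?g y)) _ _ =>
       eapply (dR_comp F); [exact H|]
  | |- is_derive (fun y => y) _ _ => apply dR_id
  | |- is_derive (fun y => ?c) _ _ => apply dR_const
  end.
Ltac der := repeat der1.

Lemma exC (f : R -> R) a b : (forall y, continuous f y) -> ex_RInt f a b.
Proof. intros; apply (@ex_RInt_continuous R_CompleteNormedModule); auto. Qed.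
Lemma RI_plus (f g : R -> R) a b : (forall y, continuous f y) -> (forall y, continuous g y) ->
  RInt f a b + RInt g a b = RInt (fun y => f y + g y) a b.
Proof. intros. symmetry. exact (RInt_plus f g a b (exC f a b H) (exC g a b H0)). Qed.
Lemma RI_minus (f g : R -> R) a b : (forall y, continuous f y) -> (forall y, continuous g y) ->
  RInt f a b - RInt g a b = RInt (fun y => f y - g y) a b.
Proof. intros. symmetry. exact (RInt_minus f g a b (exC f a b H) (exC g a b H0)). Qed.
Lemma RI_ext (f g : R -> R) a b : (forall y, f y = g y) -> RInt f a b = RInt g a b.
Proof. intros; apply RInt_ext; auto. Qed.
Lemma FTC (h g : R -> R) a b : (forall y, is_derive h y (g y)) -> (forall y, continuous g y) ->
  RInt g a b = h b - h a.
Proof. intros. apply is_RInt_unique. apply (is_RInt_derive h g a b); auto. Qed.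
Lemma RI_le0 (f : R -> R) a b : a <= b -> (forall y, continuous f y) -> (forall y, a < y < b -> f y <= 0) ->
  RInt f a b <= 0.
Proof. intros. replace 0 with (RInt (fun _ => 0) a b).
 apply RInt_le; auto. apply exC; auto. apply exC; intros; apply cR_const.
 rewrite RInt_const. unfold scal; simpl; unfold mult; simpl. ring. Qed.


Definition c2 (h : R -> R -> R) := forall x y, continuity_2d_pt h x y.
Definition C1x (h : R -> R -> R) :=
  c2 h /\ exists g, c2 g /\ forall x y, is_derive (fun z => h z y) x (g x y).

Lemma c2_plus f g : c2 f -> c2 g -> c2 (fun x y => f x y + g x y).
Proof. intros ? ? x y; apply continuity_2d_pt_plus; auto. Qed.
Lemma c2_minus f g : c2 f -> c2 g -> c2 (fun x y => f x y - g x y).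
Proof. intros ? ? x y; apply continuity_2d_pt_minus; auto. Qed.
Lemma c2_mult f g : c2 f -> c2 g -> c2 (fun x y => f x y * g x y).
Proof. intros ? ? x y; apply continuity_2d_pt_mult; auto. Qed.
Lemma c2_const c : c2 (fun _ _ => c).
Proof. intros x y; apply continuity_2d_pt_const. Qed.
Lemma c2_comp (phi : R -> R) h : (forall w, continuous phi w) -> c2 h -> c2 (fun x y => phi (h x y)).
Proof. intros Hp Hh x y. apply continuity_2d_pt_filterlim.
 apply filterlim_comp with (G := locally (h x y)).
 - apply continuity_2d_pt_filterlim. apply Hh.
 - apply Hp. Qed.
Lemma c2_pow h n : c2 h -> c2 (fun x y => h x y ^ n).
Proof. intros H; induction n; simpl. apply c2_const. apply c2_mult; auto. Qed.
Lemma c2_sumR n (h : nat -> R -> R -> R) : (forall i, c2 (h i)) -> c2 (fun x y => sumR n (fun i => h i x y)).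
Proof. intros H; induction n; simpl. apply c2_const. apply c2_plus; auto. Qed.
Lemma c2_ev k W p q dx dy : c2 (fun x y => ev k W p q dx dy x y).
Proof. unfold ev, peval. apply c2_sumR; intro m. apply c2_sumR; intro n.
 apply c2_mult; [apply c2_mult|]. apply c2_const. apply c2_pow. intros x y; apply continuity_2d_pt_id1.
 apply c2_pow. intros x y; apply continuity_2d_pt_id2. Qed.

Lemma c2_cy h x y : c2 h -> continuous (fun z => h x z) y.
Proof. intros H. apply (continuous_comp_2 (fun _ => x) (fun z => z) h).
 apply continuous_const. apply continuous_id.
 apply continuity_2d_pt_filterlim. apply H. Qed.
Lemma c2_cx h x y : c2 h -> continuous (fun z => h z y) x.
Proof. intros H. apply (continuous_comp_2 (fun z => z) (fun _ => y) h).
 apply continuous_id. apply continuous_const.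
 apply continuity_2d_pt_filterlim. apply H. Qed.

Lemma C1x_plus f g : C1x f -> C1x g -> C1x (fun x y => f x y + g x y).
Proof. intros [Hf [f' [Hf' Df]]] [Hg [g' [Hg' Dg]]]. split. apply c2_plus; auto.
 exists (fun x y => f' x y + g' x y). split. apply c2_plus; auto.
 intros; apply dR_plus; auto. Qed.
Lemma C1x_minus f g : C1x f -> C1x g -> C1x (fun x y => f x y - g x y).
Proof. intros [Hf [f' [Hf' Df]]] [Hg [g' [Hg' Dg]]]. split. apply c2_minus; auto.
 exists (fun x y => f' x y - g' x y). split. apply c2_minus; auto.
 intros; apply dR_minus; auto. Qed.
Lemma C1x_mult f g : C1x f -> C1x g -> C1x (fun x y => f x y * g x y).
Proof. intros [Hf [f' [Hf' Df]]] [Hg [g' [Hg' Dg]]]. split. apply c2_mult; auto.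
 exists (fun x y => f' x y * g x y + f x y * g' x y). split.
 apply c2_plus; apply c2_mult; auto.
 intros; eapply dval; [apply dR_mult; [apply Df|apply Dg] | reflexivity]. Qed.
Lemma C1x_const c : C1x (fun _ _ => c).
Proof. split. apply c2_const. exists (fun _ _ => 0). split. apply c2_const. intros; apply dR_const. Qed.
Lemma C1x_comp (phi phi' : R -> R) h : (forall w, is_derive phi w (phi' w)) -> (forall w, continuous phi' w) ->
  C1x h -> C1x (fun x y => phi (h x y)).
Proof. intros Dp Cp [Hh [h' [Hh' Dh]]]. split.
 apply c2_comp; auto. intros w. apply (@ex_derive_continuous R_AbsRing R_NormedModule). eexists; apply Dp.
 exists (fun x y => phi' (h x y) * h' x y). split. apply c2_mult; auto. apply c2_comp; auto.
 intros; eapply dval; [apply (dR_comp phi phi'); [apply Dp|apply Dh] | reflexivity]. Qed.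
Lemma C1x_sumR n (h : nat -> R -> R -> R) : (forall i, C1x (h i)) -> C1x (fun x y => sumR n (fun i => h i x y)).
Proof. intros H; induction n; simpl. apply C1x_const. apply C1x_plus; auto. Qed.
Lemma C1x_ev k W p q dx dy : C1x (fun x y => ev k W p q dx dy x y).
Proof. split. apply c2_ev. exists (fun x y => ev k W p q (S dx) dy x y). split. apply c2_ev.
 intros; apply ev_dx. Qed.

Lemma param_derive h g y0 y1 x : c2 h -> c2 g -> (forall x y, is_derive (fun z => h z y) x (g x y)) ->
  is_derive (fun x => RInt (fun y => h x y) y0 y1) x (RInt (fun y => g x y) y0 y1).
Proof. intros Hh Hg D.
 assert (E : RInt (fun y => g x y) y0 y1 = RInt (fun t => Derive (fun u => h u t) x) y0 y1).
 { apply RInt_ext; intros. symmetry; apply is_derive_unique; apply D. }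
 rewrite E. apply (is_derive_RInt_param h y0 y1 x).
 - apply filter_forall. intros. eexists; apply D.
 - intros t _. apply continuity_2d_pt_ext with (f := g). intros. symmetry; apply is_derive_unique; apply D.
   apply Hg.
 - apply filter_forall. intros. apply exC. intros; apply c2_cy; auto. Qed.
Lemma param_cont h y0 y1 x : C1x h -> continuous (fun x => RInt (fun y => h x y) y0 y1) x.
Proof. intros [Hh [g [Hg D]]]. apply (@ex_derive_continuous R_AbsRing R_NormedModule).
 eexists. apply param_derive; eauto. Qed.

Lemma Int2_dx h g x0 x1 y0 y1 : c2 h -> (forall x y, is_derive (fun z => h z y) x (g x y)) -> C1x g ->
  Int2 x0 x1 y0 y1 g = RInt (fun y => h x1 y - h x0 y) y0 y1.
Proof. intros Hh D Cg. unfold Int2.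
 rewrite (FTC (fun x => RInt (fun y => h x y) y0 y1)).
 - apply RI_minus; intros; apply c2_cy; auto.
 - intros. apply param_derive; auto. destruct Cg; auto.
 - intros. apply param_cont; auto. Qed.

Lemma Int2_ext g1 g2 x0 x1 y0 y1 : (forall x y, g1 x y = g2 x y) -> Int2 x0 x1 y0 y1 g1 = Int2 x0 x1 y0 y1 g2.
Proof. intros. unfold Int2. apply RI_ext; intros. apply RI_ext; intros. auto. Qed.
Lemma Int2_plus g1 g2 x0 x1 y0 y1 : C1x g1 -> C1x g2 ->
  Int2 x0 x1 y0 y1 (fun x y => g1 x y + g2 x y) = Int2 x0 x1 y0 y1 g1 + Int2 x0 x1 y0 y1 g2.
Proof. intros H1 H2. unfold Int2. rewrite RI_plus.
 apply RI_ext; intros. rewrite RI_plus; auto.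
 intros; apply c2_cy; destruct H1; auto. intros; apply c2_cy; destruct H2; auto.
 intros; apply param_cont; auto. intros; apply param_cont; auto. Qed.
Lemma Int2_scal c g x0 x1 y0 y1 : C1x g ->
  Int2 x0 x1 y0 y1 (fun x y => c * g x y) = c * Int2 x0 x1 y0 y1 g.
Proof. intros H. unfold Int2.
 rewrite (RI_ext _ (fun x => c * RInt (fun y => g x y) y0 y1)).
 apply (RInt_scal (V:=R_CompleteNormedModule)). apply exC. intros; apply param_cont; auto.
 intros. apply (RInt_scal (V:=R_CompleteNormedModule)). apply exC. intros; apply c2_cy; destruct H; auto. Qed.
Lemma Int2_sumR n (g : nat -> R -> R -> R) x0 x1 y0 y1 : (forall i, C1x (g i)) ->
  Int2 x0 x1 y0 y1 (fun x y => sumR n (fun i => g i x y)) = sumR n (fun i => Int2 x0 x1 y0 y1 (g i)).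
Proof. intros H. induction n; simpl.
 - unfold Int2. rewrite (RI_ext _ (fun _ => 0)). rewrite RInt_const. unfold scal; simpl; unfold mult; simpl; ring.
   intros. rewrite RInt_const. unfold scal; simpl; unfold mult; simpl; ring.
 - rewrite Int2_plus. rewrite IHn. auto. apply C1x_sumR; auto. auto. Qed.
Lemma c2_divc h c : c2 h -> c2 (fun x y => h x y / c).
Proof. intros H. unfold Rdiv. apply c2_mult; auto. apply c2_const. Qed.


Lemma C1x_idx : C1x (fun x _ => x).
Proof. split. intros x y; apply continuity_2d_pt_id1. exists (fun _ _ => 1). split. apply c2_const.
 intros; apply dR_id. Qed.
Lemma C1x_idy : C1x (fun _ y => y).
Proof. split. intros x y; apply continuity_2d_pt_id2. exists (fun _ _ => 0). split. apply c2_const.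
 intros; apply dR_const. Qed.
Lemma C1x_pow h n : C1x h -> C1x (fun x y => h x y ^ n).
Proof. intros H; induction n; simpl. apply C1x_const. apply C1x_mult; auto. Qed.

Definition Kmono (xs ys : nat -> R) p q m n m' n' :=
  Int2 (xs p) (xs (S p)) (ys q) (ys (S q)) (fun x y => x^m * y^n * (x^m' * y^n')).

Lemma l2ip_expand k Nx Ny xs ys U V : l2ip k Nx Ny xs ys U V =
  sumR Nx (fun p => sumR Ny (fun q => sumR (S k) (fun m => sumR (S k) (fun m' =>
    sumR (S k) (fun n => sumR (S k) (fun n' =>
      U p q m n * V p q m' n' * Kmono xs ys p q m n m' n')))))).
Proof. unfold l2ip. apply sumR_ext; intros p _. apply sumR_ext; intros q _.
 rewrite (Int2_ext _ (fun x y => sumR (S k) (fun m => sumR (S k) (fun m' => sumR (S k) (fun n =>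
    sumR (S k) (fun n' => (U p q m n * V p q m' n') * (x^m*y^n*(x^m'*y^n')))))))).
 - assert (Cm : forall m n m' n', C1x (fun x y : R => x ^ m * y ^ n * (x ^ m' * y ^ n'))).
   { intros. repeat apply C1x_mult; apply C1x_pow; first [apply C1x_idx | apply C1x_idy]. }
   Ltac c1 Cm := intros; repeat (apply C1x_sumR; intros); apply C1x_mult; [apply C1x_const | apply Cm].
   rewrite Int2_sumR by c1 Cm. apply sumR_ext; intros m _. rewrite Int2_sumR by c1 Cm; apply sumR_ext; intros m' _.
   rewrite Int2_sumR by c1 Cm; apply sumR_ext; intros n _. rewrite Int2_sumR by c1 Cm; apply sumR_ext; intros n' _.
   rewrite Int2_scal by auto. reflexivity.
 - intros x y. unfold ev, peval. rewrite sumR_mult. apply sumR_ext; intros m _.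
   apply sumR_ext; intros m' _. rewrite sumR_mult. apply sumR_ext; intros n _.
   idtac. apply sumR_ext; intros n' _. simpl dfact. rewrite !Nat.sub_0_r. ring.
Qed.

Lemma l2ip_sym k Nx Ny xs ys U V : l2ip k Nx Ny xs ys U V = l2ip k Nx Ny xs ys V U.
Proof. unfold l2ip. apply sumR_ext; intros p _. apply sumR_ext; intros q _.
 apply Int2_ext; intros; ring. Qed.

Lemma l2ip_derive k Nx Ny xs ys (U Ut : R -> dgfun) t :
  (forall p q m n, is_derive (fun s => U s p q m n) t (Ut t p q m n)) ->
  is_derive (fun s => l2ip k Nx Ny xs ys (U s) (U s)) t
    (l2ip k Nx Ny xs ys (Ut t) (U t) + l2ip k Nx Ny xs ys (U t) (Ut t)).
Proof. intros HU.
 apply (is_derive_ext (fun s => sumR Nx (fun p => sumR Ny (fun q => sumR (S k) (fun m => sumR (S k) (fun m' =>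
    sumR (S k) (fun n => sumR (S k) (fun n' =>
      U s p q m n * U s p q m' n' * Kmono xs ys p q m n m' n')))))))).
 { intros; symmetry; apply l2ip_expand. }
 eapply dval.
 { apply dR_sumR; intro p. apply dR_sumR; intro q. apply dR_sumR; intro m. apply dR_sumR; intro m'.
   apply dR_sumR; intro n. apply dR_sumR; intro n'. apply dR_mult. apply dR_mult. apply HU. apply HU.
   apply dR_const. }
 rewrite !l2ip_expand.
 rewrite <- sumR_plus. apply sumR_ext; intros p _.
 rewrite <- sumR_plus. apply sumR_ext; intros q _.
 rewrite <- sumR_plus. apply sumR_ext; intros m _.
 rewrite <- sumR_plus. apply sumR_ext; intros m' _.
 rewrite <- sumR_plus. apply sumR_ext; intros n _.
 rewrite <- sumR_plus. apply sumR_ext; intros n' _. ring.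
Qed.


Lemma der_cpt (g : R -> R) x l : is_derive g x l -> continuity_pt g x.
Proof. intros H. apply continuity_pt_filterlim.
 apply (@ex_derive_continuous R_AbsRing R_NormedModule). eexists; eauto. Qed.

Lemma mvt_le (g dg : R -> R) a b M : a <= b -> (forall w, is_derive g w (dg w)) ->
  (forall w, a <= w <= b -> dg w <= M) -> g b - g a <= M * (b - a).
Proof. intros Hab D B.
 destruct (MVT_gen g a b dg) as [c [Hc E]].
 - intros; apply D.
 - intros; eapply der_cpt; apply D.
 - rewrite Rmin_left, Rmax_right in Hc by lra. rewrite E.
   apply Rmult_le_compat_r. lra. apply B; lra. Qed.

Section Flux.
Variables (f f' F : R -> R) (alpha : R).
Hypothesis Hf : forall w, is_derive f w (f' w).
Hypothesis HF : forall w, is_derive F w (f w).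

Lemma key_up a b : a <= b -> (forall w, a <= w <= b -> Rabs (f' w) <= alpha) ->
  F b - F a - (b - a) * (f a + f b) / 2 <= alpha / 2 * ((b - a) * (b - a)).
Proof. intros Hab B.
 set (psi := fun s => F s - F a - (s - a) * (f a + f s) / 2 - alpha / 2 * ((s - a) * (s - a))).
 assert (H : psi b - psi a <= 0 * (b - a)).
 { apply (mvt_le psi (fun s => f s - (f a + f s)/2 - (s - a) * f' s / 2 - alpha * (s - a))); auto.
   - intros w. unfold psi. eapply dval.
     { apply dR_minus. apply dR_minus. apply dR_minus. apply HF. apply dR_const.
       apply dR_mult. apply dR_mult. apply dR_minus. apply dR_id. apply dR_const.
       apply dR_plus. apply dR_const. apply Hf. apply dR_const.
       apply dR_mult. apply dR_const. apply dR_mult. apply dR_minus. apply dR_id. apply dR_const. apply dR_minus. apply dR_id. apply dR_const. }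
     cbv beta; field.
   - intros w Hw. assert (E1 : f w - f a <= alpha * (w - a)).
     { apply (mvt_le f f' a w alpha). lra. auto. intros. specialize (B w0 ltac:(lra)).
       apply Rabs_le_between in B. lra. }
     specialize (B w Hw). apply Rabs_le_between in B.
     assert (- f' w * (w - a) <= alpha * (w - a)) by (apply Rmult_le_compat_r; lra).
     lra. }
 unfold psi in H. lra. Qed.

Lemma key_lo a b : a <= b -> (forall w, a <= w <= b -> Rabs (f' w) <= alpha) ->
  - (alpha / 2 * ((b - a) * (b - a))) <= F b - F a - (b - a) * (f a + f b) / 2.
Proof. intros Hab B.
 set (psi := fun s => - (F s - F a - (s - a) * (f a + f s) / 2) - alpha / 2 * ((s - a) * (s - a))).
 assert (H : psi b - psi a <= 0 * (b - a)).
 { apply (mvt_le psi (fun s => - (f s - (f a + f s)/2 - (s - a) * f' s / 2) - alpha * (s - a))); auto.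
   - intros w. unfold psi. eapply dval.
     { apply dR_minus. apply dR_opp. apply dR_minus. apply dR_minus. apply HF. apply dR_const.
       apply dR_mult. apply dR_mult. apply dR_minus. apply dR_id. apply dR_const.
       apply dR_plus. apply dR_const. apply Hf. apply dR_const.
       apply dR_mult. apply dR_const. apply dR_mult. apply dR_minus. apply dR_id. apply dR_const. apply dR_minus. apply dR_id. apply dR_const. }
     cbv beta; field.
   - intros w Hw. assert (E1 : f a - f w <= alpha * (w - a)).
     { assert (f a - f w = (fun s => - f s) w - (fun s => - f s) a) by (simpl; ring). rewrite H.
       apply (mvt_le (fun s => - f s) (fun s => - f' s) a w alpha). lra. intros; apply dR_opp; auto.
       intros. specialize (B w0 ltac:(lra)).
       apply Rabs_le_between in B. lra. }
     specialize (B w Hw). apply Rabs_le_between in B.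
     assert (f' w * (w - a) <= alpha * (w - a)) by (apply Rmult_le_compat_r; lra).
     lra. }
 unfold psi in H. lra. Qed.

Lemma flux_le a b : (forall w, Rmin a b <= w <= Rmax a b -> Rabs (f' w) <= alpha) ->
  F b - F a - LF f alpha a b * (b - a) <= 0.
Proof. intros B. unfold LF.
 assert (Ha : 0 <= alpha). { apply Rle_trans with (Rabs (f' a)). apply Rabs_pos. apply B.
   split; [apply Rmin_l | apply Rmax_l]. }
 destruct (Rle_dec a b) as [Hab|Hab].
 - rewrite Rmin_left, Rmax_right in B by lra.
   pose proof (key_up a b Hab B).
   assert (0 <= alpha * ((b - a) * (b - a))) by (apply Rmult_le_pos; [lra|apply Rle_0_sqr]).
   replace (F b - F a - ((f a + f b) / 2 - alpha * (a - b)) * (b - a)) with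
     ((F b - F a - (b - a) * (f a + f b) / 2) - alpha * ((b - a) * (b - a))) by field.
   lra.
 - rewrite Rmin_right, Rmax_left in B by lra.
   pose proof (key_lo b a ltac:(lra) B).
   assert (0 <= alpha * ((a - b) * (a - b))) by (apply Rmult_le_pos; [lra|apply Rle_0_sqr]).
   replace (F b - F a - ((f a + f b) / 2 - alpha * (a - b)) * (b - a)) with
     (- (F a - F b - (a - b) * (f b + f a) / 2) - alpha * ((a - b) * (a - b))) by field.
   lra.
Qed.
End Flux.


Ltac contS := solve [intros; repeat cont1].
Ltac comb := repeat first [ rewrite RI_minus by contS | rewrite RI_plus by contS ].

Section Main.
Variables (k Nx Ny : nat) (xs ys : nat -> R) (f f' F : R -> R) (alpha : R) (U : dgfun).
Hypothesis HNx : (1 <= Nx)%nat.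
Hypothesis HNy : (1 <= Ny)%nat.
Hypothesis Hxs : forall i, (i < Nx)%nat -> xs i < xs (S i).
Hypothesis Hys : forall j, (j < Ny)%nat -> ys j < ys (S j).
Hypothesis Hf : forall w, is_derive f w (f' w).
Hypothesis Hf' : forall w, continuous f' w.
Hypothesis HF : forall w, is_derive F w (f w).
Hypothesis Halpha : forall w, in_value_range k Nx Ny xs ys U w -> Rabs (f' w) <= alpha.

Local Notation u := (ev k U).
Local Notation nx := (nextI Nx).
Local Notation px := (prevI Nx).
Local Notation ny := (nextI Ny).
Local Notation py := (prevI Ny).

Lemma Hfc : forall w, continuous f w.
Proof. intros. apply (@ex_derive_continuous R_AbsRing R_NormedModule). eexists; apply Hf. Qed.
Lemma HFc : forall w, continuous F w.
Proof. intros. apply (@ex_derive_continuous R_AbsRing R_NormedModule). eexists; apply HF. Qed.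

Section Cell.
Variables p q : nat.
Local Notation xl := (xs p).
Local Notation xr := (xs (S p)).
Local Notation yl := (ys q).
Local Notation yr := (ys (S q)).
Local Notation pR := (nx p).
Local Notation pL := (px p).
Local Notation qR := (ny q).
Local Notation qL := (py q).
Local Notation xlR := (xs (nx p)).
Local Notation xrL := (xs (S (px p))).
Local Notation ylR := (ys (ny q)).
Local Notation yrL := (ys (S (py q))).

Definition GF :=
  Int2 xl xr yl yr (fun x y => f (u p q 0 0 x y) * u p q 1 0 x y)
  - RInt (fun y => LF f alpha (u pR q 0 0 xlR y) (u p q 0 0 xr y) * u p q 0 0 xr y
                 - LF f alpha (u p q 0 0 xl y) (u pL q 0 0 xrL y) * u p q 0 0 xl y) yl yr.
Definition GX :=
  Int2 xl xr yl yr (fun x y => u p q 0 0 x y * u p q 3 0 x y)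
  - RInt (fun y => u pR q 2 0 xlR y * u p q 0 0 xr y - u p q 2 0 xl y * u p q 0 0 xl y) yl yr
  + RInt (fun y => u pR q 1 0 xlR y * u p q 1 0 xr y - u p q 1 0 xl y * u p q 1 0 xl y) yl yr
  - RInt (fun y => u p q 0 0 xr y * u p q 2 0 xr y - u pL q 0 0 xrL y * u p q 2 0 xl y) yl yr.
Definition GY :=
  Int2 xl xr yl yr (fun x y => u p q 0 0 x y * u p q 1 2 x y)
  + RInt (fun x => u p qR 0 1 x ylR * u p q 1 0 x yr - u p q 0 1 x yl * u p q 1 0 x yl) xl xr
  + ( - u p qR 0 1 xr ylR * u p q 0 0 xr yr
      + u pL qR 0 1 xrL ylR * u p q 0 0 xl yr
      + u p q 0 1 xr yl * u p q 0 0 xr yl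
      - u pL q 0 1 xrL yl * u p q 0 0 xl yl)
  - RInt (fun y => u pR q 0 0 xlR y * u p q 0 2 xr y - u p q 0 0 xl y * u p q 0 2 xl y) yl yr
  + ( u pR q 0 0 xlR yr * u p q 0 1 xr yr
      - u pR qL 0 0 xlR yrL * u p q 0 1 xr yl
      - u p q 0 0 xl yr * u p q 0 1 xl yr
      + u p qL 0 0 xl yrL * u p q 0 1 xl yl)
  - RInt (fun x => u p q 0 0 x yr * u p q 1 1 x yr - u p qL 0 0 x yrL * u p q 1 1 x yl) xl xr.

Definition FR := RInt (fun y => F (u p q 0 0 xr y) - LF f alpha (u pR q 0 0 xlR y) (u p q 0 0 xr y) * u p q 0 0 xr y) yl yr.
Definition FL := RInt (fun y => LF f alpha (u p q 0 0 xl y) (u pL q 0 0 xrL y) * u p q 0 0 xl y - F (u p q 0 0 xl y)) yl yr.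

Lemma GF_eq : GF = FR + FL.
Proof. pose proof Hfc as Hfc0. pose proof HFc as HFc0.
 unfold GF, FR, FL. rewrite (Int2_dx (fun x y => F (u p q 0 0 x y))).
 - unfold LF. comb. apply RI_ext; intros; cbv beta; ring.
 - apply c2_comp. exact HFc. apply c2_ev.
 - intros. eapply dval. der. cbv beta; ring.
 - apply C1x_mult. apply (C1x_comp f f'); auto. apply C1x_ev. apply C1x_ev.
Qed.

Definition DR := RInt (fun y => - (u p q 1 0 xr y * u p q 1 0 xr y) / 2
     - u pR q 2 0 xlR y * u p q 0 0 xr y + u pR q 1 0 xlR y * u p q 1 0 xr y) yl yr.
Definition DL := RInt (fun y => - (u p q 1 0 xl y * u p q 1 0 xl y) / 2
     + u pL q 0 0 xrL y * u p q 2 0 xl y) yl yr.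

Lemma GX_eq : GX = DR + DL.
Proof. unfold GX, DR, DL.
 rewrite (Int2_dx (fun x y => u p q 0 0 x y * u p q 2 0 x y - u p q 1 0 x y * u p q 1 0 x y / 2)).
 - comb. apply RI_ext; intros; cbv beta; field.
 - apply c2_minus. apply c2_mult; apply c2_ev. apply c2_divc. apply c2_mult; apply c2_ev.
 - intros. eapply dval. der. cbv beta; field.
 - apply C1x_mult; apply C1x_ev.
Qed.

Definition YR := RInt (fun y => - (u p q 0 1 xr y * u p q 0 1 xr y) / 2 + u pR q 0 1 xlR y * u p q 0 1 xr y) yl yr.
Definition YL := RInt (fun y => - (u p q 0 1 xl y * u p q 0 1 xl y) / 2) yl yr.
Definition TopI := RInt (fun x => u p qR 0 1 x ylR * u p q 1 0 x yr) xl xr.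
Definition BotI := RInt (fun x => - (u p q 0 0 x yl * u p q 1 1 x yl) - u p q 0 1 x yl * u p q 1 0 x yl
      + u p qL 0 0 x yrL * u p q 1 1 x yl) xl xr.
Definition hB (y : R) := u pR q 0 0 xlR y * u p q 0 1 xr y - u p q 0 0 xl y * u p q 0 1 xl y.
Definition PTS :=
    ( - u p qR 0 1 xr ylR * u p q 0 0 xr yr
      + u pL qR 0 1 xrL ylR * u p q 0 0 xl yr
      + u p q 0 1 xr yl * u p q 0 0 xr yl
      - u pL q 0 1 xrL yl * u p q 0 0 xl yl)
  + ( u pR q 0 0 xlR yr * u p q 0 1 xr yr
      - u pR qL 0 0 xlR yrL * u p q 0 1 xr yl
      - u p q 0 0 xl yr * u p q 0 1 xl yr
      + u p qL 0 0 xl yrL * u p q 0 1 xl yl)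
  - (hB yr - hB yl).

Lemma T3_eq : Int2 xl xr yl yr (fun x y => u p q 0 0 x y * u p q 1 2 x y) =
  RInt (fun x => u p q 0 0 x yr * u p q 1 1 x yr - u p q 0 0 x yl * u p q 1 1 x yl) xl xr
  - RInt (fun y => u p q 0 1 xr y * u p q 0 1 xr y / 2 - u p q 0 1 xl y * u p q 0 1 xl y / 2) yl yr.
Proof.
 assert (C : C1x (fun x y => u p q 0 1 x y * u p q 1 1 x y)) by (apply C1x_mult; apply C1x_ev).
 transitivity (RInt (fun x => u p q 0 0 x yr * u p q 1 1 x yr - u p q 0 0 x yl * u p q 1 1 x yl) xl xr
   - RInt (fun x => RInt (fun y => u p q 0 1 x y * u p q 1 1 x y) yl yr) xl xr).
 - rewrite RI_minus. unfold Int2. apply RI_ext. intros x.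
   rewrite <- (FTC (fun y => u p q 0 0 x y * u p q 1 1 x y) (fun y => u p q 0 1 x y * u p q 1 1 x y + u p q 0 0 x y * u p q 1 2 x y)).
   + comb. apply RI_ext; intros; cbv beta; ring.
   + intros. eapply dval. der. cbv beta; ring.
   + contS.
   + contS.
   + intros; apply param_cont; auto.
 - f_equal.
   change (RInt (fun x => RInt (fun y => u p q 0 1 x y * u p q 1 1 x y) yl yr) xl xr)
     with (Int2 xl xr yl yr (fun x y => u p q 0 1 x y * u p q 1 1 x y)).
   rewrite (Int2_dx (fun x y => u p q 0 1 x y * u p q 0 1 x y / 2)); auto.
   + apply c2_divc. apply c2_mult; apply c2_ev.
   + intros. eapply dval. der. cbv beta; field.
Qed.

Lemma T10_eq : RInt (fun y => u pR q 0 0 xlR y * u p q 0 2 xr y - u p q 0 0 xl y * u p q 0 2 xl y) yl yr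
  = (hB yr - hB yl) - RInt (fun y => u pR q 0 1 xlR y * u p q 0 1 xr y - u p q 0 1 xl y * u p q 0 1 xl y) yl yr.
Proof. unfold hB.
 rewrite <- (FTC (fun y => u pR q 0 0 xlR y * u p q 0 1 xr y - u p q 0 0 xl y * u p q 0 1 xl y)
   (fun y => u pR q 0 1 xlR y * u p q 0 1 xr y + u pR q 0 0 xlR y * u p q 0 2 xr y
     - (u p q 0 1 xl y * u p q 0 1 xl y + u p q 0 0 xl y * u p q 0 2 xl y))).
 - comb. apply RI_ext; intros; cbv beta; ring.
 - intros. eapply dval. der. cbv beta; ring.
 - contS.
Qed.

Lemma GY_eq : GY = YR + YL + TopI + BotI + PTS.
Proof. unfold GY. rewrite T3_eq, T10_eq.
 assert (EY : RInt (fun y => u pR q 0 1 xlR y * u p q 0 1 xr y - u p q 0 1 xl y * u p q 0 1 xl y) yl yr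
   - RInt (fun y => u p q 0 1 xr y * u p q 0 1 xr y / 2 - u p q 0 1 xl y * u p q 0 1 xl y / 2) yl yr
   = YR + YL).
 { unfold YR, YL. comb. apply RI_ext; intros; cbv beta; field. }
 assert (EX : RInt (fun x => u p q 0 0 x yr * u p q 1 1 x yr - u p q 0 0 x yl * u p q 1 1 x yl) xl xr
   + RInt (fun x => u p qR 0 1 x ylR * u p q 1 0 x yr - u p q 0 1 x yl * u p q 1 0 x yl) xl xr
   - RInt (fun x => u p q 0 0 x yr * u p q 1 1 x yr - u p qL 0 0 x yrL * u p q 1 1 x yl) xl xr
   = TopI + BotI).
 { unfold TopI, BotI. comb. apply RI_ext; intros; cbv beta; ring. }
 unfold PTS. lra.
Qed.
End Cell.

Lemma ivr2 P Q X Y P' Q' X' Y' w : (P < Nx)%nat -> (Q < Ny)%nat -> (P' < Nx)%nat -> (Q' < Ny)%nat ->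
  xs P <= X <= xs (S P) -> ys Q <= Y <= ys (S Q) -> xs P' <= X' <= xs (S P') -> ys Q' <= Y' <= ys (S Q') ->
  Rmin (u P Q 0 0 X Y) (u P' Q' 0 0 X' Y') <= w <= Rmax (u P Q 0 0 X Y) (u P' Q' 0 0 X' Y') ->
  in_value_range k Nx Ny xs ys U w.
Proof. intros. destruct (Rle_dec (u P Q 0 0 X Y) (u P' Q' 0 0 X' Y')).
 - rewrite Rmin_left, Rmax_right in H7 by lra. exists P, Q, X, Y, P', Q', X', Y'. tauto.
 - rewrite Rmin_right, Rmax_left in H7 by lra. exists P', Q', X', Y', P, Q, X, Y. tauto. Qed.

Lemma FQ p q : (p < Nx)%nat -> (q < Ny)%nat -> FR p q + FL (nx p) q <= 0.
Proof. intros Hp Hq. pose proof Hfc as Hfc0. pose proof HFc as HFc0.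
 unfold FR, FL. rewrite prevI_nextI by auto. unfold LF. comb.
 apply RI_le0. specialize (Hys q Hq); lra. contS.
 intros y Hy. cbv beta.
 pose proof (flux_le f f' F alpha Hf HF (u (nx p) q 0 0 (xs (nx p)) y) (u p q 0 0 (xs (S p)) y)) as FL0.
 unfold LF in FL0.
 assert (Hb : forall w, Rmin (u (nx p) q 0 0 (xs (nx p)) y) (u p q 0 0 (xs (S p)) y) <= w <=
     Rmax (u (nx p) q 0 0 (xs (nx p)) y) (u p q 0 0 (xs (S p)) y) -> Rabs (f' w) <= alpha).
 { intros w Hw. apply Halpha. apply (ivr2 (nx p) q (xs (nx p)) y p q (xs (S p)) y w); auto.
   apply nextI_lt; auto.
   pose proof (Hxs (nx p) (nextI_lt Nx p HNx)); lra. lra. pose proof (Hxs p Hp); lra. lra. }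
 specialize (FL0 Hb). lra.
Qed.

Lemma sq_le a b : - (a * a) / 2 + b * a + - (b * b) / 2 <= 0.
Proof. assert (0 <= (b - a) * (b - a)) by apply Rle_0_sqr. lra. Qed.

Lemma DQ p q : (p < Nx)%nat -> (q < Ny)%nat -> DR p q + DL (nx p) q <= 0.
Proof. intros Hp Hq. unfold DR, DL. rewrite prevI_nextI by auto. comb.
 apply RI_le0. specialize (Hys q Hq); lra. contS.
 intros y Hy. cbv beta.
 pose proof (sq_le (u p q 1 0 (xs (S p)) y) (u (nx p) q 1 0 (xs (nx p)) y)). lra. Qed.

Lemma YQ p q : (p < Nx)%nat -> (q < Ny)%nat -> YR p q + YL (nx p) q <= 0.
Proof. intros Hp Hq. unfold YR, YL. comb.
 apply RI_le0. specialize (Hys q Hq); lra. contS.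
 intros y Hy. cbv beta.
 pose proof (sq_le (u p q 0 1 (xs (S p)) y) (u (nx p) q 0 1 (xs (nx p)) y)). lra. Qed.

Definition CY p q := u p (ny q) 0 1 (xs (S p)) (ys (ny q)) * (u p q 0 0 (xs (S p)) (ys (S q)) - u p (ny q) 0 0 (xs (S p)) (ys (ny q)))
  - u p (ny q) 0 1 (xs p) (ys (ny q)) * (u p q 0 0 (xs p) (ys (S q)) - u p (ny q) 0 0 (xs p) (ys (ny q))).

Lemma TB p q : (q < Ny)%nat -> TopI p q + BotI p (ny q) = CY p q.
Proof. intros Hq. unfold TopI, BotI, CY. rewrite prevI_nextI by auto. comb.
 rewrite (FTC (fun x => u p (ny q) 0 1 x (ys (ny q)) * (u p q 0 0 x (ys (S q)) - u p (ny q) 0 0 x (ys (ny q))))).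
 - ring.
 - intros. eapply dval. der. cbv beta; ring.
 - contS.
Qed.

Definition G1 p q := u p q 0 1 (xs (S p)) (ys q) * u p q 0 0 (xs (S p)) (ys q).
Definition G2 p q := u p q 0 1 (xs p) (ys q) * u p q 0 0 (xs p) (ys q).
Definition G3 p q := u p q 0 1 (xs p) (ys q) * u p (py q) 0 0 (xs p) (ys (S (py q))).
Definition G4 p q := u (px p) q 0 1 (xs (S (px p))) (ys q) * u p (py q) 0 0 (xs p) (ys (S (py q))).
Definition G5 p q := u (px p) q 0 1 (xs (S (px p))) (ys q) * u p q 0 0 (xs p) (ys q).

Lemma PT p q : (p < Nx)%nat -> (q < Ny)%nat -> CY p q + PTS p q =
  (G1 p q - G1 p (ny q)) - (G2 p q - G2 p (ny q)) + (G3 p q - G3 p (ny q))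
  - (G4 p q - G4 p (ny q)) + (G4 p q - G4 (nx p) q) - (G5 p q - G5 (nx p) q).
Proof. intros Hp Hq. unfold CY, PTS, hB, G1, G2, G3, G4, G5. rewrite !prevI_nextI by auto. ring. Qed.

Lemma sum2_ext (A B : nat -> nat -> R) : (forall p q, (p < Nx)%nat -> (q < Ny)%nat -> A p q = B p q) ->
  sumR Nx (fun p => sumR Ny (fun q => A p q)) = sumR Nx (fun p => sumR Ny (fun q => B p q)).
Proof. intros H. apply sumR_ext; intros. apply sumR_ext; intros. auto. Qed.
Lemma sum2_plus (A B : nat -> nat -> R) :
  sumR Nx (fun p => sumR Ny (fun q => A p q + B p q)) =
  sumR Nx (fun p => sumR Ny (fun q => A p q)) + sumR Nx (fun p => sumR Ny (fun q => B p q)).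
Proof. rewrite <- sumR_plus. apply sumR_ext; intros. apply sumR_plus. Qed.
Lemma sum2_minus (A B : nat -> nat -> R) :
  sumR Nx (fun p => sumR Ny (fun q => A p q - B p q)) =
  sumR Nx (fun p => sumR Ny (fun q => A p q)) - sumR Nx (fun p => sumR Ny (fun q => B p q)).
Proof. rewrite <- sumR_minus. apply sumR_ext; intros. apply sumR_minus. Qed.
Lemma tel_x (A : nat -> nat -> R) : sumR Nx (fun p => sumR Ny (fun q => A p q - A (nx p) q)) = 0.
Proof. rewrite (sumR_ext Nx _ (fun p => sumR Ny (fun q => A p q) - sumR Ny (fun q => A (nx p) q))).
 apply (tel_sum Nx (fun p => sumR Ny (fun q => A p q))); auto. intros; apply sumR_minus. Qed.
Lemma sumR_zero n : sumR n (fun _ => 0) = 0.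
Proof. induction n; simpl; auto. rewrite IHn; ring. Qed.
Lemma tel_y (A : nat -> nat -> R) : sumR Nx (fun p => sumR Ny (fun q => A p q - A p (ny q))) = 0.
Proof. rewrite (sumR_ext Nx _ (fun _ => 0)). apply sumR_zero. intros.
 apply (tel_sum Ny (fun q => A i q)); auto. Qed.
Lemma sum2_le0 (A : nat -> nat -> R) : (forall p q, (p < Nx)%nat -> (q < Ny)%nat -> A p q <= 0) ->
  sumR Nx (fun p => sumR Ny (fun q => A p q)) <= 0.
Proof. intros H. apply sumR_le0; intros. apply sumR_le0; intros. auto. Qed.

Lemma sumGF : sumR Nx (fun p => sumR Ny (fun q => GF p q)) <= 0.
Proof. rewrite (sum2_ext _ (fun p q => (FR p q + FL (nx p) q) + (FL p q - FL (nx p) q))).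
 rewrite sum2_plus, tel_x. pose proof (sum2_le0 (fun p q => FR p q + FL (nx p) q)). 
 assert (sumR Nx (fun p => sumR Ny (fun q => FR p q + FL (nx p) q)) <= 0) by (apply H; intros; apply FQ; auto).
 lra. intros. rewrite GF_eq. ring. Qed.

Lemma sumGX : sumR Nx (fun p => sumR Ny (fun q => GX p q)) <= 0.
Proof. rewrite (sum2_ext _ (fun p q => (DR p q + DL (nx p) q) + (DL p q - DL (nx p) q))).
 rewrite sum2_plus, tel_x. pose proof (sum2_le0 (fun p q => DR p q + DL (nx p) q)). 
 assert (sumR Nx (fun p => sumR Ny (fun q => DR p q + DL (nx p) q)) <= 0) by (apply H; intros; apply DQ; auto).
 lra. intros. rewrite GX_eq. ring. Qed.

Definition telx (A : nat -> nat -> R) p q := A p q - A (nx p) q.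
Definition tely (A : nat -> nat -> R) p q := A p q - A p (ny q).
Lemma tel_x' A : sumR Nx (fun p => sumR Ny (fun q => telx A p q)) = 0.
Proof. apply tel_x. Qed.
Lemma tel_y' A : sumR Nx (fun p => sumR Ny (fun q => tely A p q)) = 0.
Proof. apply tel_y. Qed.

Lemma sumGY : sumR Nx (fun p => sumR Ny (fun q => GY p q)) <= 0.
Proof. rewrite (sum2_ext _ (fun p q => (YR p q + YL (nx p) q) + telx YL p q + tely BotI p q +
   tely G1 p q - tely G2 p q + tely G3 p q - tely G4 p q + telx G4 p q - telx G5 p q)).
 - repeat (rewrite sum2_minus || rewrite sum2_plus). rewrite !tel_x', !tel_y'.
   assert (sumR Nx (fun p => sumR Ny (fun q => YR p q + YL (nx p) q)) <= 0)
     by (apply sum2_le0; intros; apply YQ; auto).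
   rewrite sum2_plus in H. lra.
 - intros. rewrite GY_eq. unfold telx, tely.
   assert (E := PT p q H H0). rewrite <- (TB p q H0) in E. lra.
Qed.

Lemma scheme_split : scheme_rhs k Nx Ny xs ys f alpha U U =
  sumR Nx (fun p => sumR Ny (fun q => GF p q + GX p q + GY p q)).
Proof. unfold scheme_rhs. apply sumR_ext; intros. apply sumR_ext; intros.
 unfold GF, GX, GY. cbv zeta. ring. Qed.

Lemma scheme_le0 : scheme_rhs k Nx Ny xs ys f alpha U U <= 0.
Proof. rewrite scheme_split, !sum2_plus. pose proof sumGF; pose proof sumGX; pose proof sumGY. lra. Qed.
End Main.

Theorem proposition2p1
  (k : nat)
  (f f' : R -> R)
  (Hf : forall w, is_derive f w (f' w))
  (Hf' : forall w, continuous f' w)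
  (a b c d : R) (Nx Ny : nat) (xs ys : nat -> R)
  (HNx : (1 <= Nx)%nat) (HNy : (1 <= Ny)%nat)
  (Hxs : forall i, (i < Nx)%nat -> xs i < xs (S i))
  (Hys : forall j, (j < Ny)%nat -> ys j < ys (S j))
  (Ha : xs 0%nat = a) (Hb : xs Nx = b) (Hc : ys 0%nat = c) (Hd : ys Ny = d)
  (T : R) (alpha : R)
  (U : R -> dgfun) (Ut : R -> dgfun)
  (HU : forall t, 0 < t < T -> forall p q m n,
      is_derive (fun s => U s p q m n) t (Ut t p q m n))
  (HUt : forall t, 0 < t < T -> forall p q m n,
      continuous (fun s => Ut s p q m n) t)
  (Halpha : forall t, 0 < t < T -> forall w,
      in_value_range k Nx Ny xs ys (U t) w -> Rabs (f' w) <= alpha)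
  (Hscheme : forall t, 0 < t < T -> forall V : dgfun,
      l2ip k Nx Ny xs ys (Ut t) V = scheme_rhs k Nx Ny xs ys f alpha (U t) V) :
  forall t, 0 < t < T ->
    exists l, is_derive (fun s => l2ip k Nx Ny xs ys (U s) (U s)) t l /\ l <= 0.
Proof.
 intros t Ht.
 assert (Hfc : forall w, continuous f w).
 { intros. apply (@ex_derive_continuous R_AbsRing R_NormedModule). eexists; apply Hf. }
 assert (HF : forall w, is_derive (fun z => RInt f 0 z) w (f w)).
 { intros w. apply (is_derive_RInt f (fun z => RInt f 0 z) 0 w).
   apply filter_forall. intros z. apply (@RInt_correct R_CompleteNormedModule). apply exC; auto.
   auto. }
 exists (l2ip k Nx Ny xs ys (Ut t) (U t) + l2ip k Nx Ny xs ys (U t) (Ut t)). split.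
 - apply l2ip_derive. intros; apply HU; auto.
 - rewrite (l2ip_sym k Nx Ny xs ys (U t) (Ut t)). rewrite Hscheme by auto.
   pose proof (scheme_le0 k Nx Ny xs ys f f' (fun z => RInt f 0 z) alpha (U t) HNx HNy Hxs Hys Hf Hf' HF
     (Halpha t Ht)). lra.
Qed.
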